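(* Let $G$ be a graph on $n$ vertices with $3\leq n\leq 7$ and let $k$ be an integer with $2\leq k<n$. If $\psi_k(G)=n-k+1$, then $\psi_j(G)=n-j+1$ for all integers $j$ with $k<j\leq n$.
   Context: All graphs are finite, simple and nonempty. For a graph $G$ and a positive integer $k$, a $k$-path vertex cover ($k$-PVC) of $G$ is a set $S$ of vertices such that every path on $k$ vertices in $G$ contains at least one vertex of $S$ (if $G$ has no path on $k$ vertices, the empty set is a $k$-PVC). $\psi_k(G)$ denotes the minimum cardinality of a $k$-PVC of $G$. *)

(* Defs.v *)
From mathcomp Require Import all_boot.
Set Implicit Arguments. Unset Strict Implicit. Unset Printing Implicit Defensive.

(* A finite simple graph: vertex type T : finType, edge relation e : rel T,
   assumed symmetric and irreflexive (hypotheses in the theorem). *)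

Definition is_kpath (T : finType) (e : rel T) (k : nat) (p : seq T) : bool :=
  [&& size p == k, uniq p &
      (if p is x :: s then path e x s else true)].

Definition kpvc (T : finType) (e : rel T) (k : nat) (S : {set T}) : bool :=
  [forall p : k.-tuple T, is_kpath e k p ==> has (mem S) p].

(* psi_k(G): minimum cardinality of a k-PVC (the full vertex set is always a
   k-PVC for k >= 1, so the minimum is attained below #|T|). *)
Definition psi (T : finType) (e : rel T) (k : nat) : nat :=
  \big[minn/#|T|]_(S : {set T} | kpvc e k S) #|S|.

(* Main.v *)
Require Import Defs.
From mathcomp Require Import all_boot.
From mathcomp Require Import zify.
Set Implicit Arguments. Unset Strict Implicit. Unset Printing Implicit Defensive.

Section Aux.
Variables (T : finType) (e : rel T).
Hypothesis He_sym : symmetric e.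
Hypothesis He_irr : irreflexive e.

Definition pth (q : seq T) := if q is x :: r then path e x r else true.

Lemma covers (X : {set T}) (q : seq T) :
  uniq q -> size q = #|X| -> all (mem X) q -> forall x, x \in X -> x \in q.
Proof.
move=> uq sq aq x xX; apply/negPn/negP => xq.
have : size (x :: q) <= size (enum X).
  apply: uniq_leq_size; first by rewrite /= xq uq.
  move=> y; rewrite inE mem_enum => /orP[/eqP->//|yq].
  by move/allP: aq => /(_ y yq).
by rewrite -cardE /= sq ltnn.
Qed.

Lemma NB (q : seq T) x : pth q -> 2 <= size q -> x \in q ->
  exists j, [/\ j < size q, (j == (index x q).+1) || (j.+1 == index x q) &
                e x (nth x q j)].
Proof.
case: q => [|h t] // pq st xq; rewrite /= in pq.
move Ei : (index x (h :: t)) => i.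
have ilt : i < (size t).+1 by rewrite -Ei index_mem.
have xi : nth x (h :: t) i = x by rewrite -Ei nth_index.
case: (ltnP i (size t)) => hi.
  exists i.+1; split => //; first by rewrite eqxx.
  by move/(pathP x): pq => /(_ i hi); rewrite xi.
exists i.-1.
have i0 : 0 < i by move: st hi; rewrite /= => st hi; clear -st hi; lia.
split; first by rewrite /=; lia.
  by apply/orP; right; rewrite prednK.
have : i.-1 < size t by lia.
move/(pathP x): pq => H /H.
have E : nth x t i.-1 = x by rewrite -[RHS]xi -{2}(prednK i0).
by rewrite E He_sym.
Qed.

Lemma ATT1 (X : {set T}) (q : seq T) x :
  uniq q -> size q = #|X| -> all (mem X) q -> pth q -> 2 <= #|X| ->
  x \in X -> (forall w, w \in X -> ~~ e x w) -> False.
Proof.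
move=> uq sq aq pq cX xX H.
have s2 : 2 <= size q by rewrite sq.
have [j [jl _ ex]] := NB pq s2 (covers uq sq aq xX).
have : nth x q j \in X by move/allP: aq; apply; rewrite mem_nth.
by move/H; rewrite ex.
Qed.

Lemma ATT3 (X : {set T}) (q : seq T) b x y z :
  uniq q -> size q = #|X| -> all (mem X) q -> pth q -> 2 <= #|X| ->
  x \in X -> y \in X -> z \in X -> x != y -> y != z -> x != z ->
  (forall w, w \in X -> e x w -> w = b) ->
  (forall w, w \in X -> e y w -> w = b) ->
  (forall w, w \in X -> e z w -> w = b) -> False.
Proof.
move=> uq sq aq pq cX xX yX zX nxy nyz nxz Hx Hy Hz.
have s2 : 2 <= size q by rewrite sq.
have key : forall u, u \in X -> (forall w, w \in X -> e u w -> w = b) ->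
   b \in q /\ ((index b q == (index u q).+1) || ((index b q).+1 == index u q)).
  move=> u uX Hu.
  have [j [jl hj ex]] := NB pq s2 (covers uq sq aq uX).
  have nX : nth u q j \in X by move/allP: aq; apply; rewrite mem_nth.
  have := Hu _ nX ex => eb.
  by rewrite -eb mem_nth // index_uniq.
have [bq hx] := key x xX Hx.
have [_ hy] := key y yX Hy.
have [_ hz] := key z zX Hz.
have inj : forall u v, u \in q -> v \in q -> index u q = index v q -> u = v.
  by move=> u v uq' vq' E; rewrite -(nth_index u uq') E nth_index.
have xq := covers uq sq aq xX.
have yq := covers uq sq aq yX.
have zq := covers uq sq aq zX.
have ixy : index x q != index y q by apply/eqP => /inj -/(_ xq yq) E; rewrite E eqxx in nxy.
have iyz : index y q != index z q by apply/eqP => /inj -/(_ yq zq) E; rewrite E eqxx in nyz.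
have ixz : index x q != index z q by apply/eqP => /inj -/(_ xq zq) E; rewrite E eqxx in nxz.
move: hx hy hz ixy iyz ixz.
move: (index x q) (index y q) (index z q) (index b q) => a1 a2 a3 a4.
clear.
by case/orP=> /eqP h1; case/orP=> /eqP h2; case/orP=> /eqP h3; subst;
  rewrite ?eqSS; try (by rewrite eqxx); move=> *; lia.
Qed.


Ltac pathE := rewrite /=; repeat (apply/andP; split);
  (first [done | assumption | (rewrite He_sym; assumption)]).
Ltac tryP TR L := solve [apply: (TR L) => //; pathE].
Ltac falseE := match goal with
 | |- is_true (_ ?a ?a) -> _ => by rewrite He_irr
 | H : ?r ?a ?b = false |- is_true (?r ?a ?b) -> _ => by rewrite H
 | H : ?r ?b ?a = false |- is_true (?r ?a ?b) -> _ => by rewrite He_sym H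
 end.
Ltac neqT us := apply/eqP; let E := fresh "E" in move=> E; move: us; rewrite E /= !inE !eqxx /= ?orbT /= ?andbF //.
Ltac memT memW := rewrite memW !inE ?eqxx ?orbT //.
Ltac splitW memW := move=> w; rewrite memW !inE;
  (repeat (case/orP; [move/eqP->|])); try move/eqP->.
Ltac condA1 memW := splitW memW;
  first [ by rewrite eqxx | move=> _; apply/negP; let H := fresh "H" in intro H; revert H; falseE ].
Ltac condA3 memW := splitW memW;
  first [ by move=> _ _ | by rewrite eqxx | move=> _; falseE ].
Ltac tryA1 A1 memW us u v := solve [exfalso; apply: (A1 u v); [memT memW|memT memW|neqT us|condA1 memW]].
Ltac tryA3 A3 memW us u b x y z := solve [exfalso; apply: (A3 u b x y z);
  [memT memW|memT memW|memT memW|memT memW|neqT us|neqT us|neqT us|neqT us|neqT us|neqT us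
  |condA3 memW|condA3 memW|condA3 memW]].

Lemma core (m : nat) (W : {set T}) : 3 <= m <= 7 -> #|W| = m ->
  (forall u, u \in W -> exists q, [/\ uniq q, size q = m.-1, pth q & all (mem (W :\ u)) q]) ->
  exists q, [/\ uniq q, size q = m, pth q & all (mem W) q].
Proof.
move=> hm cW D.
have /card_gt0P [v vW] : 0 < #|W| by rewrite cW; clear -hm; lia.
have [P [uP sP pP aP]] := D v vW.
have vP : v \notin P.
  by apply/negP => /(allP aP); rewrite !inE eqxx.
have us : uniq (v :: P) by rewrite /= vP uP.
have aW : all (mem W) (v :: P).
  rewrite /= vW /=; apply/allP => y /(allP aP); rewrite !inE; case/andP=> //.
have memW : forall w, (w \in W) = (w \in v :: P).
  move=> w; apply/idP/idP; last by move/(allP aW).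
  by apply: covers => //=; rewrite sP cW; clear -hm; lia.
have TR : forall q : seq nat, uniq q -> size q = m -> all (fun i => i < m) q ->
    pth (map (nth v (v :: P)) q) ->
    exists q, [/\ uniq q, size q = m, pth q & all (mem W) q].
  move=> q uq sq aq pq; exists (map (nth v (v :: P)) q); split => //.
  - rewrite map_inj_in_uniq // => i j iq jq /eqP.
    rewrite nth_uniq //= ?sP; first by move/eqP.
    + by rewrite ?sP; move/allP: aq => /(_ i iq) h; clear -h hm; lia.
    + by rewrite ?sP; move/allP: aq => /(_ j jq) h; clear -h hm; lia.
  - by rewrite size_map.
  - apply/allP => y /mapP [i iq ->]; apply: (allP aW); rewrite mem_nth //= sP.
    by move/allP: aq => /(_ i iq) h; clear -h hm; lia.
have A1 : forall u x, u \in W -> x \in W -> x != u ->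
    (forall w, w \in W -> w != u -> ~~ e x w) -> False.
  move=> u x uW xW xu H.
  have [q [uq sq pq aq]] := D u uW.
  have cX : #|W :\ u| = m.-1 by move: (cardsD1 u W); rewrite uW cW; clear -hm; lia.
  apply: (@ATT1 (W :\ u) q x uq _ aq pq).
  - by rewrite cX.
  - by rewrite cX; clear -hm; lia.
  - by rewrite !inE xu.
  - by move=> w; rewrite !inE => /andP[wu wW]; apply: H.
have A3 : forall u b x y z, u \in W -> x \in W -> y \in W -> z \in W ->
    x != u -> y != u -> z != u -> x != y -> y != z -> x != z ->
    (forall w, w \in W -> w != u -> e x w -> w = b) ->
    (forall w, w \in W -> w != u -> e y w -> w = b) ->
    (forall w, w \in W -> w != u -> e z w -> w = b) -> False.
  move=> u b x y z uW xW yW zW xu yu zu nxy nyz nxz Hx Hy Hz.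
  have [q [uq sq pq aq]] := D u uW.
  have cX : #|W :\ u| = m.-1 by move: (cardsD1 u W); rewrite uW cW; clear -hm; lia.
  apply: (@ATT3 (W :\ u) q b x y z uq _ aq pq _ _ _ _ nxy nyz nxz).
  - by rewrite cX.
  - by rewrite cX; clear -hm; lia.
  - by rewrite !inE xu.
  - by rewrite !inE yu.
  - by rewrite !inE zu.
  - by move=> w; rewrite !inE => /andP[wu wW]; apply: Hx.
  - by move=> w; rewrite !inE => /andP[wu wW]; apply: Hy.
  - by move=> w; rewrite !inE => /andP[wu wW]; apply: Hz.
clear D aP aW.
have : m = 3 \/ m = 4 \/ m = 5 \/ m = 6 \/ m = 7 by clear -hm; lia.
clear cW hm.
case=> [?|[?|[?|[?|?]]]]; subst m.
{ case: P sP uP pP vP us TR memW => [|p1 [|p2 [|? ?]]] sP uP pP vP us TR memW; try (simpl in sP; discriminate sP).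
  rewrite /= in pP; repeat (case/andP: pP => ? pP).
  case E1: (e v p1); first by tryP TR [::0;1;2].
  case E2: (e v p2); first by tryP TR [::1;2;0].
  all: first [ tryA1 A1 memW us p1 v | tryA1 A1 memW us p2 v ].
}
{ case: P sP uP pP vP us TR memW => [|p1 [|p2 [|p3 [|? ?]]]] sP uP pP vP us TR memW; try (simpl in sP; discriminate sP).
  rewrite /= in pP; repeat (case/andP: pP => ? pP).
  case E1: (e v p1); first by tryP TR [::0;1;2;3].
  case E3: (e v p3); first by tryP TR [::1;2;3;0].
  all: case E2: (e v p2).
  all: first [ tryA1 A1 memW us p1 v | tryA1 A1 memW us p2 v | tryA1 A1 memW us p3 v ].
}
{ case: P sP uP pP vP us TR memW => [|p1 [|p2 [|p3 [|p4 [|? ?]]]]] sP uP pP vP us TR memW; try (simpl in sP; discriminate sP).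
  rewrite /= in pP; repeat (case/andP: pP => ? pP).
  case E1: (e v p1); first by tryP TR [::0;1;2;3;4].
  case E4: (e v p4); first by tryP TR [::1;2;3;4;0].
  all: case E2: (e v p2).
  all: case E3: (e v p3).
  all: first [ tryP TR [::1;2;0;3;4] | tryA1 A1 memW us p1 v | tryA1 A1 memW us p2 v | tryA1 A1 memW us p3 v | tryA1 A1 memW us p4 v ].
}
{ case: P sP uP pP vP us TR memW => [|p1 [|p2 [|p3 [|p4 [|p5 [|? ?]]]]]] sP uP pP vP us TR memW; try (simpl in sP; discriminate sP).
  rewrite /= in pP; repeat (case/andP: pP => ? pP).
  case E1: (e v p1); first by tryP TR [::0;1;2;3;4;5].
  case E5: (e v p5); first by tryP TR [::1;2;3;4;5;0].
  all: case E2: (e v p2).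
  all: case E3: (e v p3).
  all: case E4: (e v p4).
  all: first [ tryP TR [::1;2;3;0;4;5] | tryP TR [::1;2;0;3;4;5] | tryA1 A1 memW us p1 v | tryA1 A1 memW us p2 v | tryA1 A1 memW us p3 v | tryA1 A1 memW us p4 v | tryA1 A1 memW us p5 v | solve [case Fp1p3: (e p1 p3); [tryP TR [::0;2;1;3;4;5]|]; case Fp1p5: (e p1 p5); [tryP TR [::0;2;3;4;5;1]|]; case Fp3p5: (e p3 p5); [tryP TR [::1;2;0;4;3;5]|]; tryA3 A3 memW us p2 p4 v p1 p3] ].
}
{ case: P sP uP pP vP us TR memW => [|p1 [|p2 [|p3 [|p4 [|p5 [|p6 [|? ?]]]]]]] sP uP pP vP us TR memW; try (simpl in sP; discriminate sP).
  rewrite /= in pP; repeat (case/andP: pP => ? pP).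
  case E1: (e v p1); first by tryP TR [::0;1;2;3;4;5;6].
  case E6: (e v p6); first by tryP TR [::1;2;3;4;5;6;0].
  all: case E2: (e v p2).
  all: case E3: (e v p3).
  all: case E4: (e v p4).
  all: case E5: (e v p5).
  all: first [ tryP TR [::1;2;3;4;0;5;6] | tryP TR [::1;2;3;0;4;5;6] | tryP TR [::1;2;0;3;4;5;6] | tryA1 A1 memW us p1 v | tryA1 A1 memW us p2 v | tryA1 A1 memW us p3 v | tryA1 A1 memW us p4 v | tryA1 A1 memW us p5 v | tryA1 A1 memW us p6 v | solve [case Fp1p3: (e p1 p3); [tryP TR [::0;2;1;3;4;5;6]|]; case Fp1p5: (e p1 p5); [tryP TR [::0;4;3;2;1;5;6]|]; case Fp1p6: (e p1 p6); [tryP TR [::0;2;3;4;5;6;1]|]; case Fp3p6: (e p3 p6); [tryP TR [::0;4;5;6;3;2;1]|]; case Fp3p5: (e p3 p5); [tryP TR [::1;2;0;4;3;5;6]|]; tryA3 A3 memW us p2 p4 v p1 p3] | solve [case Fp1p3: (e p1 p3); [tryP TR [::0;2;1;3;4;5;6]|]; case Fp1p6: (e p1 p6); [tryP TR [::0;2;3;4;5;6;1]|]; case Fp1p4: (e p1 p4); [tryP TR [::6;5;0;2;3;4;1]|]; case Fp3p6: (e p3 p6); [tryP TR [::1;2;0;5;4;3;6]|]; case Fp4p6: (e p4 p6); [tryP TR [::0;5;6;4;3;2;1]|]; tryA3 A3 memW us p2 p5 v p1 p6] | solve [case Fp4p6: (e p4 p6); [tryP TR [::0;5;6;4;3;2;1]|];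 case Fp2p6: (e p2 p6); [tryP TR [::0;3;4;5;6;2;1]|]; case Fp1p6: (e p1 p6); [tryP TR [::0;5;4;3;2;1;6]|]; case Fp1p4: (e p1 p4); [tryP TR [::0;3;2;1;4;5;6]|]; case Fp2p4: (e p2 p4); [tryP TR [::6;5;0;3;4;2;1]|]; tryA3 A3 memW us p5 p3 v p6 p4] ].
}
Qed.

End Aux.

Section Main.
Variables (T : finType) (e : rel T).

Definition Rj (j : nat) := forall W : {set T}, #|W| = j ->
  exists q, [/\ uniq q, size q = j, pth e q & all (mem W) q].

Lemma psi_le (k : nat) (S : {set T}) : kpvc e k S -> psi e k <= #|S|.
Proof.
move=> H; rewrite /psi.
have : S \in index_enum {set T} by rewrite mem_index_enum.
elim: (index_enum _) => [//|a r IH]; rewrite inE big_cons.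
case/orP => [/eqP <-|Sr]; first by rewrite H geq_minl.
case: (kpvc e k a); last exact: IH.
by rewrite geq_min IH ?orbT.
Qed.

Lemma cardC_ (A : {set T}) : #|~: A| = #|T| - #|A|.
Proof. by rewrite -(cardsC A) addKn. Qed.

Lemma R_of_psi (n k : nat) : #|T| = n -> k <= n -> psi e k = n - k + 1 -> Rj k.
Proof.
move=> Hn hkn Hpsi W cW.
have nk : ~~ kpvc e k (~: W).
  apply/negP => /psi_le; rewrite Hpsi cardC_ Hn cW.
  by clear -hkn; lia.
move: nk; rewrite /kpvc negb_forall => /existsP [p].
rewrite negb_imply => /andP [kp nh].
move: kp; rewrite /is_kpath => /and3P [/eqP sp up pp].
exists (val p); split => //.
apply/allP => x xp; apply/negPn/negP => xW.
move/negP: nh; apply; apply/hasP; exists x => //.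
by move: xW; rewrite !inE.
Qed.

Lemma subset_of_size (A : {set T}) (m : nat) : m <= #|A| ->
  exists B : {set T}, B \subset A /\ #|B| = m.
Proof.
move/card_geqP => [s [us ss sA]].
exists [set x in s]; split.
  by apply/subsetP => x; rewrite inE => /sA.
by rewrite cardsE; move/card_uniqP: us => ->.
Qed.

Lemma psi_of_R (n j : nat) : #|T| = n -> 1 <= j <= n -> Rj j -> psi e j = n - j + 1.
Proof.
move=> Hn hj HR.
apply/eqP; rewrite eqn_leq; apply/andP; split.
  have [S [_ cS]] : exists S : {set T}, S \subset setT /\ #|S| = n - j + 1.
    by apply: subset_of_size; rewrite cardsT Hn; clear -hj; lia.
  rewrite -cS; apply: psi_le.
  apply/forallP => p; apply/implyP => /and3P [/eqP sp up _].
  apply/negPn/negP => /negP nh.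
  have : size p <= size (enum (~: S)).
    apply: uniq_leq_size => // x xp; rewrite mem_enum inE.
    by apply/negP => xS; apply: nh; apply/hasP; exists x.
  rewrite -cardE cardC_ cS Hn sp; clear -hj; lia.
rewrite /psi; apply: (big_ind (fun x => n - j + 1 <= x)).
- by rewrite Hn; clear -hj; lia.
- by move=> x y hx hy; rewrite leq_min hx hy.
move=> S HS; rewrite leqNgt; apply/negP => hS.
have [W [WS cW]] : exists W : {set T}, W \subset ~: S /\ #|W| = j.
  by apply: subset_of_size; rewrite cardC_ Hn; clear -hj hS; lia.
have [q [uq sq pq aq]] := HR W cW.
have tq : size q == j by rewrite sq.
move/forallP: HS => /(_ (Tuple tq)) /implyP.
rewrite /is_kpath /= tq uq /=.
have -> : (if q is x :: r then path e x r else true) = true by case: q {uq sq aq tq} pq.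
move=> /(_ isT) /hasP [x xq xS].
move/allP: aq => /(_ x xq) xW.
by move/subsetP: WS => /(_ x xW); rewrite !inE; move: xS; rewrite !inE => ->.
Qed.

End Main.

Theorem mainTheorem14 (T : finType) (e : rel T)
    (He_sym : symmetric e) (He_irr : irreflexive e)
    (n k : nat) (Hn : #|T| = n) (Hn3 : 3 <= n) (Hn7 : n <= 7)
    (Hk2 : 2 <= k) (Hkn : k < n)
    (Hpsi : psi e k = n - k + 1) :
  forall j : nat, k < j <= n -> psi e j = n - j + 1.
Proof.
move=> j /andP [hkj hjn].
have Rk := R_of_psi Hn (ltnW Hkn) Hpsi.
have step : forall i, 2 <= i -> i < n -> Rj e i -> Rj e i.+1.
  move=> i hi2 hin Ri W cW.
  apply: (core He_sym He_irr) => //.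
    by clear -hi2 hin Hn7; lia.
  move=> u uW.
  have cU : #|W :\ u| = i by move: (cardsD1 u W); rewrite uW cW; clear; lia.
  by have [q [uq sq pq aq]] := Ri _ cU; exists q; split.
have Rall : forall d, k + d <= n -> Rj e (k + d).
  elim=> [|d IH] hd; first by rewrite addn0.
  rewrite addnS; apply: step.
  - by clear -Hk2; lia.
  - by clear -hd; lia.
  - by apply: IH; clear -hd; lia.
have -> : j = k + (j - k) by clear -hkj; lia.
apply: (psi_of_R Hn).
  by clear -hkj hjn Hk2; lia.
by apply: Rall; clear -hkj hjn; lia.
Qed.
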